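(* Let $\mathcal E\subset\mathcal V$ be finite, let $\mathcal R_0=\mathcal E\cup-\mathcal S(L)$, $\mathcal R_{i+1}=\{v\in\mathcal V:\pi(\Psi(v))\cap\mathcal R_i\neq\emptyset\}$ for $i\geq0$, and $\mathcal R=\bigcup_{i\ge0}\mathcal R_i$. Let $H\in\mathbb Z_{\geq0}$ be such that $d\ell^H\mathcal E\subset\mathbb Z$ and let $N\in\mathbb Q_{\geq0}$ be such that $\mathcal E\cup-\mathcal S(L)\subset\mathbb Q_{\leq N}$. Put $c=\left\lfloor(n+1)\frac{N+\mu_\kappa}{\tau}\right\rfloor+H$. Then $\mathcal R_i=\mathcal R$ for every integer $i\geq c$.
   Context: Let $\mathbf K$ be a field and $\ell\geq 2$ an integer. Let $L=a_n\phi_\ell^n+\dots+a_0$ with $n\geq1$, $a_i\in\mathbf K[z]$, $a_0a_n\neq0$, where $\phi_\ell(f)(z)=f(z^\ell)$ acting on Hahn series with coefficients in $\mathbf K$ and value group $\mathbb Q$. Let $\mathcal P(L)=\{(\ell^i,j): 0\le i\le n,\ j\in\operatorname{supp} a_i\}$. The Newton polygon of $L$ is the convex hull of $\{(\ell^i,j): 0\le i\le n,\ j\geq\operatorname{val} a_i\}\subset\mathbb R^2$; its non-vertical edges have slopes $\mu_1<\dots<\mu_\kappa$, $\mathcal S(L)=\{\mu_1,\dots,\mu_\kappa\}$. Let $d\geq1$ be a common multiple of the denominators of the $\mu_k$. Define $\Psi(v)=\{v\ell^i+j:(\ell^i,j)\in\mathcal P(L)\}$, $\pi(q)=\max\{(q-j)/\ell^i:(\ell^i,j)\in\mathcal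 P(L)\}$. Let $\mathcal V_0=-\mathcal S(L)$, $\mathcal V_{i+1}=\bigcup_{v\in\mathcal V_i}\pi(\Psi(v))$, $\mathcal V=\bigcup_{i\ge0}\mathcal V_i$ (a well-ordered subset of $\bigcup_{i\ge0}\frac1{d\ell^i}\mathbb Z$). For $v\in\mathbb Q$ let $\epsilon(v)=\min\{w\in\mathcal V: w>v\}-v\in\mathbb Q_{>0}\cup\{+\infty\}$ ($+\infty$ if this set is empty), and $\tau=\min\{\epsilon(-\mu_1),\dots,\epsilon(-\mu_\kappa),(d\ell^n)^{-1}\}\in\mathbb Q_{>0}$. *)

(* Defs.v *)
From HB Require Import structures.
From mathcomp Require Import all_boot all_order all_algebra.
Set Implicit Arguments. Unset Strict Implicit. Unset Printing Implicit Defensive.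
Import Order.TTheory GRing.Theory Num.Theory.
Local Open Scope ring_scope.

Section Mahler.
(* The operator L = a_n phi_l^n + ... + a_0 : only a 0, ..., a n are used. *)
Variables (K : fieldType) (l n : nat) (a : nat -> {poly K}).

Definition lpow (i : nat) : rat := (l ^ i)%N%:R.

Definition valp (p : {poly K}) : nat := find (fun c => c != 0) p.

(* P(L) = {(l^i, j) : 0 <= i <= n, j in supp a_i}, encoded by pairs (i, j) *)
Definition PL : seq (nat * nat) :=
  [seq (i, j) | i <- iota 0 n.+1,
                j <- [seq j <- iota 0 (size (a i)) | (a i)`_j != 0]].

(* indices i with a_i <> 0: their lowest points (l^i, val a_i) *)
Definition idxL : seq nat := [seq i <- iota 0 n.+1 | a i != 0].

Definition slope_of (i i' : nat) : rat :=
  ((valp (a i'))%:R - (valp (a i))%:R) / (lpow i' - lpow i).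

(* the line of slope mu through (l^i, val a_i) supports the Newton polygon
   from below *)
Definition supports (mu : rat) (i : nat) : bool :=
  all (fun k => (valp (a i))%:R - mu * lpow i <= (valp (a k))%:R - mu * lpow k)
      idxL.

(* S(L): slopes of the non-vertical edges of the Newton polygon, i.e. the
   slopes of the lines through two distinct vertices that support the
   (upward-closed) Newton polygon from below. *)
Definition slopesL : seq rat :=
  undup [seq slope_of i i' | i <- idxL, i' <- [seq i' <- idxL | (i < i')%N & supports (slope_of i i') i]].

Definition mu_max : rat := foldr Num.max (head 0 slopesL) slopesL.

Definition Psi (v : rat) : seq rat := [seq v * lpow p.1 + (p.2)%:R | p <- PL].

Definition pi_val (q : rat) (p : nat * nat) : rat := (q - (p.2)%:R) / lpow p.1.

Definition piL (q : rat) : rat :=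
  foldr Num.max (pi_val q (head (0%N, 0%N) PL)) [seq pi_val q p | p <- PL].

Fixpoint Vi (k : nat) : seq rat :=
  match k with
  | 0 => [seq - mu | mu <- slopesL]
  | k'.+1 => undup (flatten [seq [seq piL q | q <- Psi v] | v <- Vi k'])
  end.

Definition inV (w : rat) : Prop := exists k, w \in Vi k.

Definition is_min (S : rat -> Prop) (m : rat) : Prop :=
  S m /\ forall x, S x -> m <= x.

(* eps(v) = e (finite case): e = min {w in V : w > v} - v.
   (eps(v) = +oo when no such w exists; then no e satisfies is_eps v e.) *)
Definition is_eps (v e : rat) : Prop :=
  is_min (fun x => exists w, inV w /\ v < w /\ x = w - v) e.

Definition is_tau (d : nat) (tau : rat) : Prop :=
  is_min (fun x => x = ((d * l ^ n)%N%:R)^-1 \/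
                   exists2 mu, mu \in slopesL & is_eps (- mu) x) tau.

Fixpoint Ri (E : seq rat) (k : nat) (v : rat) : Prop :=
  match k with
  | 0 => v \in E \/ - v \in slopesL
  | k'.+1 => inV v /\ exists2 q, q \in Psi v & Ri E k' (piL q)
  end.

Definition inR (E : seq rat) (v : rat) : Prop := exists k, Ri E k v.

End Mahler.

(* Main.v *)
Require Import Defs.
From HB Require Import structures.
From mathcomp Require Import all_boot all_order all_algebra.
From mathcomp Require Import ring lra zify.
From Stdlib Require Import Classical ClassicalEpsilon.
Import Order.TTheory GRing.Theory Num.Theory.
Local Open Scope ring_scope.

Lemma foldr_max_ge (x0 : rat) (s : seq rat) :
  x0 <= foldr Num.max x0 s /\ forall x, x \in s -> x <= foldr Num.max x0 s.
Proof.
elim: s => [|y s [IH1 IH2]] /=; first by split.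
split; first by rewrite le_max IH1 orbT.
move=> x; rewrite inE => /orP [/eqP->|xs]; first by rewrite le_max lexx.
by rewrite le_max IH2 ?orbT.
Qed.

Lemma foldr_max_mem (x0 : rat) (s : seq rat) :
  foldr Num.max x0 s \in x0 :: s.
Proof.
elim: s => [|y s IH] /=; first by rewrite inE.
case: (leP y (foldr Num.max x0 s)) => _.
  move: IH; rewrite !inE => /orP [->|H]; first by [].
  by rewrite H !orbT.
by rewrite !inE eqxx orbT.
Qed.

Lemma foldr_max_le (x0 b : rat) (s : seq rat) :
  x0 <= b -> (forall x, x \in s -> x <= b) -> foldr Num.max x0 s <= b.
Proof.
move=> h1 h2; have := foldr_max_mem x0 s; rewrite inE => /orP [/eqP->//|].
by apply: h2.
Qed.

Lemma argmin_seq (T : eqType) (s : seq T) (g : T -> rat) :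
  s != [::] -> exists2 x, x \in s & forall y, y \in s -> g x <= g y.
Proof.
elim: s => [//|x s IH] _.
case: (eqVneq s [::]) => [->|sn].
  by exists x; rewrite ?inE ?eqxx // => y; rewrite inE => /eqP->.
have [z zs hz] := IH sn.
case: (leP (g x) (g z)) => hxz.
  exists x; first by rewrite inE eqxx.
  move=> y; rewrite inE => /orP [/eqP->//|ys]; exact: le_trans hxz (hz y ys).
exists z; first by rewrite inE zs orbT.
move=> y; rewrite inE => /orP [/eqP->|ys]; [exact: ltW | exact: hz].
Qed.

Lemma int_pos_ge1 (x : rat) : x \is a Num.int -> 0 < x -> 1 <= x.
Proof.
move=> xi xp; have := norm_intr_ge1 xi (lt0r_neq0 xp).
by rewrite ger0_norm // ltW.
Qed.

Lemma gap_int (x M : rat) : 0 < M -> x * M \is a Num.int -> 0 < x -> M^-1 <= x.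
Proof.
move=> Mp xi xp; have h := int_pos_ge1 _ xi (mulr_gt0 xp Mp).
by rewrite -div1r ler_pdivrMr.
Qed.

Lemma classical_min (P : nat -> Prop) : (exists k, P k) ->
  exists k, P k /\ forall m, P m -> (k <= m)%N.
Proof.
move=> [k0 hk0]; apply: NNPP => hn.
suff : forall k m, (m <= k)%N -> ~ P m by move/(_ k0 k0 (leqnn _)).
elim=> [|k IH] m hm hp.
  by apply: hn; exists m; split => // m' _; move: hm; rewrite leqn0 => /eqP ->.
move: hm; rewrite leq_eqVlt => /orP [/eqP em|hm]; last by apply: (IH m).
apply: hn; exists m; split => // m' hm'; rewrite leqNgt; apply/negP => hlt.
by apply: (IH m') => //; rewrite -ltnS -em.
Qed.

Lemma pigeon (C : eqType) (s : seq C) (Q : nat -> C -> Prop) :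
  (forall k, exists2 c, c \in s & Q k c) ->
  exists2 c, c \in s & forall m, exists k, (m <= k)%N /\ Q k c.
Proof.
move=> hall; apply: NNPP => hn.
have hb : forall c, c \in s -> exists m, forall k, (m <= k)%N -> ~ Q k c.
  move=> c hc; apply: NNPP => hm; apply: hn; exists c => // m.
  apply: NNPP => hk; apply: hm; exists m => k hk' hq; apply: hk; by exists k.
have : forall s' : seq C, {subset s' <= s} -> exists M, forall c, c \in s' -> forall k, (M <= k)%N -> ~ Q k c.
  elim=> [|c s' IH] hsub; first by exists 0%N.
  have [M1 h1] := IH (fun x hx => hsub x (@mem_behead _ (c :: s') x hx)).
  have [M2 h2] := hb c (hsub c (mem_head _ _)).
  exists (maxn M1 M2) => c'; rewrite inE => /orP [/eqP ->|hc'] k hk.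
    by apply: h2; apply: leq_trans hk; rewrite leq_maxr.
  by apply: h1 => //; apply: leq_trans hk; rewrite leq_maxl.
move=> /(_ s (fun x hx => hx)) [M hM].
by have [c hc hq] := hall M; apply: (hM c hc M (leqnn _)).
Qed.

Section BPsec.
Variables (T : eqType) (s : seq T) (sg it : T -> rat).
Definition Lg b (t : rat) := t * sg b + it b.
Definition mnz a t := forall b, b \in s -> Lg a t <= Lg b t.
Definition brkg t := exists a b, [/\ a \in s, b \in s, sg a != sg b, mnz a t & mnz b t].

Lemma Lg_diff b a t t' : Lg b t' - Lg a t' = (Lg b t - Lg a t) + (t' - t) * (sg b - sg a).
Proof. rewrite /Lg; ring. Qed.

Lemma BP_lt a x y : a \in s -> mnz a x -> ~ mnz a y -> x < y ->
  exists c, [/\ x <= c, c < y & brkg c].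
Proof.
move=> ha hx hy hxy.
pose S := [seq b <- s | Lg b y < Lg a y].
have Sn : S != [::].
  apply/negP => /eqP S0; apply: hy => b hb; rewrite leNgt; apply/negP => hlt.
  have : b \in S by rewrite mem_filter hlt hb.
  by rewrite S0.
have Ssg : forall b, b \in s -> Lg b y < Lg a y -> sg b < sg a.
  move=> b hb hlt; rewrite ltNge; apply/negP => hle.
  have h1 := hx b hb; have := Lg_diff b a x y.
  have : 0 <= (y - x) * (sg b - sg a) by apply: mulr_ge0; rewrite subr_ge0 //; exact: ltW.
  move: hlt h1; lra.
pose cr b := (it a - it b) / (sg b - sg a).
have crE : forall b t, sg b != sg a -> Lg b t - Lg a t = (t - cr b) * (sg b - sg a).
  move=> b t hne; rewrite /cr /Lg; have : sg b - sg a != 0 by rewrite subr_eq0.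
  move=> hne'; field; done.
have [b0 hb0 hmin] := @argmin_seq _ S cr Sn.
move: hb0; rewrite mem_filter => /andP [hb0y hb0].
have hsg0 := Ssg b0 hb0 hb0y.
have hne0 : sg b0 != sg a by rewrite lt_eqF.
pose c := cr b0.
have hneg : sg b0 - sg a < 0 by rewrite subr_lt0.
exists c; split.
- have h1 := hx b0 hb0; have := crE b0 x hne0.
  rewrite -/c => e; have : 0 <= (x - c) * (sg b0 - sg a) by rewrite -e subr_ge0.
  by move=> h2; nra.
- have := crE b0 y hne0; rewrite -/c => e.
  have : (y - c) * (sg b0 - sg a) < 0 by rewrite -e subr_lt0.
  by move=> h2; nra.
have hac : mnz a c.
  move=> r hr; rewrite leNgt; apply/negP => hlt.
  case: (ltP (sg r) (sg a)) => hsr; last first.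
    have := Lg_diff r a x c; have := hx r hr.
    have h3 : x <= c.
      have h1 := hx b0 hb0; have := crE b0 x hne0.
      rewrite -/c => e; have : 0 <= (x - c) * (sg b0 - sg a) by rewrite -e subr_ge0.
      by move=> h2; nra.
    have : 0 <= (c - x) * (sg r - sg a) by apply: mulr_ge0; rewrite subr_ge0.
    move: hlt; lra.
  have hner : sg r != sg a by rewrite lt_eqF.
  have e1 := crE r c hner.
  have hcr : cr r < c.
    have : (c - cr r) * (sg r - sg a) < 0 by rewrite -e1 subr_lt0.
    have : sg r - sg a < 0 by rewrite subr_lt0.
    move=> h1 h2; nra.
  have hyc : c < y.
    have := crE b0 y hne0; rewrite -/c => e.
    have : (y - c) * (sg b0 - sg a) < 0 by rewrite -e subr_lt0.
    by move=> h2; nra.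
  have hry : Lg r y < Lg a y.
    have e2 := crE r y hner.
    have : (y - cr r) * (sg r - sg a) < 0.
      have h1 : cr r < y := lt_trans hcr hyc.
      have h2 : sg r - sg a < 0 by rewrite subr_lt0.
      nra.
    by rewrite -e2 subr_lt0.
  have : r \in S by rewrite mem_filter hry hr.
  move=> /hmin; rewrite -/c => hle; move: hcr; rewrite ltNge hle //.
have hbc : mnz b0 c.
  move=> r hr; have := crE b0 c hne0; rewrite -/c subrr mul0r => /eqP.
  rewrite subr_eq0 => /eqP ->; exact: hac.
exists a, b0; split => //; by rewrite eq_sym.
Qed.

End BPsec.

Lemma BP_gt (T : eqType) (s : seq T) (sg it : T -> rat) a x y :
  a \in s -> @mnz T s sg it a x -> ~ @mnz T s sg it a y -> y < x ->
  exists c, [/\ y < c, c <= x & @brkg T s sg it c].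
Proof.
move=> ha hx hy hyx.
have eL : forall b t, @Lg T (fun b => - sg b) it b t = @Lg T sg it b (- t).
  by move=> b t; rewrite /Lg mulrN mulNr.
have em : forall b t, @mnz T s (fun b => - sg b) it b t <-> @mnz T s sg it b (- t).
  by move=> b t; split => h r hr; move: (h r hr); rewrite !eL.
have := @BP_lt T s (fun b => - sg b) it a (- x) (- y) ha.
rewrite !em !opprK => /(_ hx hy); rewrite ltrN2 => /(_ hyx) [c [h1 h2 [a' [b' [h3 h4 h5 h6 h7]]]]].
exists (- c); split; first by rewrite ltrNr.
  by rewrite lerNl.
exists a', b'; split => //.
- by move: h5; apply: contra => /eqP ->.
- by move: h6 => /em.
by move: h7 => /em.
Qed.
Section M.
Variables (K : fieldType) (l n : nat) (a : nat -> {poly K}).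
Hypothesis hl : (2 <= l)%N.
Hypothesis ha0 : a 0%N != 0.

Local Notation PL := (PL n a).
Local Notation lp := (lpow l).
Definition Lf (p : nat * nat) (x : rat) : rat := x * lp p.1 + (p.2)%:R.
Definition minz (p : nat * nat) (x : rat) : Prop :=
  forall p', p' \in PL -> Lf p x <= Lf p' x.
Local Notation piL := (piL l n a).

Lemma lp_gt0 i : 0 < lp i.
Proof. by rewrite /lpow ltr0n expn_gt0; case: l hl. Qed.

Lemma lpD i j : lp (i + j) = lp i * lp j.
Proof. by rewrite /lpow expnD natrM. Qed.

Lemma lp_le {i j} : (i <= j)%N -> lp i <= lp j.
Proof. by move=> h; rewrite /lpow ler_nat leq_pexp2l //; case: l hl. Qed.

Lemma lp_lt2 {i j} : (i < j)%N -> 2 * lp i <= lp j.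
Proof.
move=> h; have -> : j = (i + (1 + (j - i.+1)))%N by rewrite addnA addn1 subnKC.
rewrite !lpD; have h1 : 1 <= lp (j - i.+1) by rewrite /lpow ler1n expn_gt0; case: l hl.
have h2 : 2 <= lp 1 by rewrite /lpow expn1 ler_nat.
have h3 : 2 <= lp 1 * lp (j - i.+1) by nra.
by rewrite mulrC ler_pM2l ?lp_gt0.
Qed.

Lemma lp_inj i j : lp i = lp j -> i = j.
Proof.
move=> h; case: (ltngtP i j) => // hij.
  exfalso; have := lp_lt2 hij; rewrite h; have := lp_gt0 j; lra.
exfalso; have := lp_lt2 hij; rewrite h; have := lp_gt0 j; lra.
Qed.

Lemma lp_nat i : lp i \is a Num.int.
Proof. exact: rpred_nat. Qed.

Lemma memPL i j : ((i, j) \in PL) = [&& (i <= n)%N, (j < size (a i))%N & (a i)`_j != 0].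
Proof.
apply/allpairsPdep/idP.
  move=> [x [y [hx hy e]]]; case: e => -> ->.
  rewrite mem_iota add0n ltnS /= in hx; rewrite hx /=.
  by move: hy; rewrite mem_filter mem_iota add0n /= => /andP [-> ->].
move=> /and3P [h1 h2 h3]; exists i, j; split => //.
  by rewrite mem_iota add0n ltnS.
by rewrite mem_filter mem_iota add0n h3 h2.
Qed.

Lemma valp_le {i j} : (a i)`_j != 0 -> (valp (a i) <= j)%N.
Proof.
move=> h; rewrite /valp; case: (leqP (find (fun c => c != 0) (a i)) j) => // hl'.
by have := before_find 0 hl'; rewrite h.
Qed.

Lemma valp_nz {i} : a i != 0 -> ((valp (a i) < size (a i))%N /\ (a i)`_(valp (a i)) != 0).
Proof.
move=> h; have hh : has (fun c => c != 0) (a i).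
  apply/hasP; exists (lead_coef (a i)); last by rewrite lead_coef_eq0.
  by rewrite /lead_coef mem_nth // ltn_predL size_poly_gt0.
split; first by rewrite /valp -has_find.
exact: (nth_find 0 hh).
Qed.

Lemma PL_valp {i} : (i <= n)%N -> a i != 0 -> (i, valp (a i)) \in PL.
Proof. by move=> h1 h2; have [h3 h4] := valp_nz h2; rewrite memPL h1 h3 h4. Qed.

Lemma PL_nz {i j} : (i, j) \in PL -> a i != 0.
Proof.
rewrite memPL => /and3P [_ _ h]; apply/eqP => h0; move: h; by rewrite h0 coef0 eqxx.
Qed.

Lemma PL_n0 : PL != [::].
Proof. by apply/eqP => h; have := PL_valp (leq0n n) ha0; rewrite h. Qed.

Lemma PL_le_n {p} : p \in PL -> (p.1 <= n)%N.
Proof. by case: p => i j; rewrite memPL => /and3P []. Qed.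

Lemma pi_val_le q p w : (pi_val l q p <= w) = (q <= Lf p w).
Proof. by rewrite /pi_val /Lf ler_pdivrMr ?lp_gt0 // lerBlDr. Qed.

Lemma pi_val_Lf p y : pi_val l (Lf p y) p = y.
Proof. by rewrite /pi_val /Lf addrK mulfK // lt0r_neq0 ?lp_gt0. Qed.

Lemma piL_ge q p : p \in PL -> pi_val l q p <= piL q.
Proof.
move=> hp; have [_ h] := foldr_max_ge (pi_val l q (head (0%N, 0%N) PL)) [seq pi_val l q p | p <- PL].
by apply: h; apply: map_f.
Qed.

Lemma piL_att q : exists2 p, p \in PL & piL q = pi_val l q p.
Proof.
have := foldr_max_mem (pi_val l q (head (0%N, 0%N) PL)) [seq pi_val l q p | p <- PL].
rewrite -/(Defs.piL l n a q) inE => /orP [/eqP ->|/mapP [p hp ->]]; last by exists p.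
exists (head (0%N, 0%N) PL) => //; move: PL_n0; case: (Defs.PL n a) => //= x s _.
by rewrite inE eqxx.
Qed.

Lemma piL_char {q w} : piL q = w ->
  (forall p, p \in PL -> q <= Lf p w) /\ exists2 p, p \in PL & q = Lf p w.
Proof.
move=> <-; split; first by move=> p hp; rewrite -pi_val_le; exact: piL_ge.
have [p hp e] := piL_att q; exists p => //.
by rewrite e /pi_val /Lf mulfVK ?lt0r_neq0 ?lp_gt0 // subrK.
Qed.

Lemma piL_charI q w : (forall p, p \in PL -> q <= Lf p w) ->
  (exists2 p, p \in PL & q = Lf p w) -> piL q = w.
Proof.
move=> h1 [p hp e]; apply/le_anti/andP; split.
  have [p' hp' ->] := piL_att q; by rewrite pi_val_le h1.
by rewrite -{1}(pi_val_Lf p w) -e piL_ge.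
Qed.

Lemma piL_mono q q' : q <= q' -> piL q <= piL q'.
Proof.
move=> h; have [p hp ->] := piL_att q; apply: le_trans (piL_ge q' _ hp).
by rewrite /pi_val ler_pM2r ?invr_gt0 ?lp_gt0 // lerB.
Qed.

Lemma piL_infl p y : p \in PL -> y <= piL (Lf p y).
Proof. by move=> hp; rewrite -{1}(pi_val_Lf p y) piL_ge. Qed.

Lemma argmin_PL x : exists2 p, p \in PL & minz p x.
Proof. by have [p hp h] := @argmin_seq _ PL (Lf ^~ x) PL_n0; exists p. Qed.

Lemma minz_piL p x : p \in PL -> minz p x -> piL (Lf p x) = x.
Proof.
move=> hp hm; apply: piL_charI; first by move=> p' hp'; exact: hm.
by exists p.
Qed.

Local Notation Vi := (Vi l n a).
Local Notation inV := (inV l n a).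
Local Notation slopesL := (slopesL l n a).
Local Notation mu_max := (mu_max l n a).
Local Notation Psi := (Psi l n a).

Lemma Psi_mem v q : (q \in Psi v) = (q \in [seq Lf p v | p <- PL]).
Proof. by []. Qed.

Lemma mem_Psi v q : q \in Psi v <-> exists2 p, p \in PL & q = Lf p v.
Proof. by rewrite Psi_mem; split => [/mapP [p hp ->]|[p hp ->]]; [exists p | apply: map_f]. Qed.

Lemma Vi_succ k x : x \in Vi k.+1 <->
  exists y, y \in Vi k /\ exists2 p, p \in PL & x = piL (Lf p y).
Proof.
rewrite /= mem_undup; split.
  move=> /flattenP [s /mapP [y hy ->] /mapP [q /mem_Psi [p hp ->] ->]].
  by exists y; split => //; exists p.
move=> [y [hy [p hp ->]]]; apply/flattenP; exists [seq piL q | q <- Psi y].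
  exact: map_f.
by apply: map_f; apply/mem_Psi; exists p.
Qed.

Lemma mu_le_max mu : mu \in slopesL -> mu <= mu_max.
Proof. by move=> h; have [_ h2] := foldr_max_ge (head 0 slopesL) slopesL; apply: h2. Qed.

Lemma Vi_ge k x : x \in Vi k -> - mu_max <= x.
Proof.
elim: k x => [|k IH] x.
  by move=> /mapP [mu hmu ->]; rewrite lerN2 mu_le_max.
move=> /Vi_succ [y [hy [p hp ->]]]; apply: le_trans (IH _ hy) _; exact: piL_infl.
Qed.

Lemma inV_ge x : inV x -> - mu_max <= x.
Proof. by move=> [k hk]; exact: Vi_ge hk. Qed.

Lemma inV_step y p : inV y -> p \in PL -> inV (piL (Lf p y)).
Proof. by move=> [k hk] hp; exists k.+1; apply/Vi_succ; exists y; split => //; exists p. Qed.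

Lemma inV_slope mu : mu \in slopesL -> inV (- mu).
Proof. by move=> h; exists 0%N; apply: map_f. Qed.

Variable E : seq rat.
Hypothesis hEV : forall e, e \in E -> inV e.
Local Notation Ri := (Ri l n a E).

Lemma Ri_inV {k v} : Ri k v -> inV v.
Proof.
case: k => [|k] /=; last by case.
by move=> [/hEV //|h]; rewrite -[v]opprK; apply: inV_slope.
Qed.

Lemma Ri_S k v : Ri k v -> Ri k.+1 v.
Proof.
move=> h; split; first exact: Ri_inV h.
have [p hp hm] := argmin_PL v; exists (Lf p v); first by apply/mem_Psi; exists p.
by rewrite minz_piL.
Qed.

Lemma Ri_mono k k' v : (k <= k')%N -> Ri k v -> Ri k' v.
Proof.
move=> h; elim: k' h => [|k' IH]; first by rewrite leqn0 => /eqP ->.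
rewrite leq_eqVlt => /orP [/eqP -> //|h] hr; apply: Ri_S; exact: IH.
Qed.

Definition RV (y x : rat) : Prop := inV y /\ y < x.

Lemma nacc_step x : ~ Acc RV x -> exists y, RV y x /\ ~ Acc RV y.
Proof.
move=> h; apply: NNPP => hn; apply: h; constructor => y hy.
by apply: NNPP => hy'; apply: hn; exists y.
Qed.

Definition QQ (x : rat) (yd : rat * nat) : Prop :=
  [/\ RV yd.1 x, ~ Acc RV yd.1, yd.1 \in Vi yd.2 &
      forall y k, RV y x -> ~ Acc RV y -> y \in Vi k -> (yd.2 <= k)%N].

Lemma nacc_min x : ~ Acc RV x -> exists yd, QQ x yd.
Proof.
move=> /nacc_step [y [hy hna]].
have [k hk] := hy.1.
have [d [[y' [h1 h2 h3]] h4]] := @classical_min (fun d => exists y, [/\ RV y x, ~ Acc RV y & y \in Vi d]) (ex_intro _ k (ex_intro _ y (And3 hy hna hk))).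
exists (y', d); split => // y'' k' r na m; apply: h4; by exists y''.
Qed.

Lemma wf_RV : well_founded RV.
Proof.
move=> x0; apply: NNPP => h0.
pose st x := epsilon (inhabits (0 : rat, 0%N)) (QQ x).
pose z := fix z k := if k is k'.+1 then st (z k').1 else (x0, 0%N).
have hz : forall k, ~ Acc RV (z k).1 /\ QQ (z k).1 (z k.+1).
  elim=> [|k [IH1 IH2]].
    split => //; rewrite /z /st /=; apply: epsilon_spec; exact: nacc_min _ h0.
  have h1 : ~ Acc RV (z k.+1).1 by case: IH2.
  by split => //; rewrite [z k.+2]/= ; apply: epsilon_spec; exact: nacc_min _ h1.
have dec : forall k k', (k < k')%N -> (z k').1 < (z k).1.
  move=> k; elim=> [//|k' IH]; rewrite ltnS leq_eqVlt => /orP [/eqP ->|h].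
    by have [_ [[_ h] _ _ _]] := hz k'.
  have [_ [[_ h'] _ _ _]] := hz k'; exact: lt_trans h' (IH h).
pose cats := [seq inl b | b <- Vi 0] ++ [seq inr p | p <- PL] : seq (rat + (nat * nat))%type.
pose Qc k (c : (rat + (nat * nat))%type) := match c with
  | inl b => (z k.+1).1 = b
  | inr p => exists y, [/\ (1 <= (z k.+1).2)%N, y \in Vi ((z k.+1).2.-1) & (z k.+1).1 = piL (Lf p y)] end.
have hcat : forall k, exists2 c, c \in cats & Qc k c.
  move=> k; have [_ [_ _ hin _]] := hz k.
  move: hin; case e: (z k.+1).2 => [|d] hin.
    by exists (inl (z k.+1).1) => //; rewrite mem_cat map_f.
  have [y [hy [p hp ep]]] := (Vi_succ _ _).1 hin.
  exists (inr p); first by rewrite mem_cat orbC map_f.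
  by exists y; rewrite e; split.
have [c hc hinf] := pigeon _ _ _ hcat.
case: c hc hinf => [b|p] hc hinf.
  have [k1 [_ h1]] := hinf 0%N; have [k2 [hk2 h2]] := hinf k1.+1.
  have := dec k1.+1 k2.+1 hk2; rewrite h1 h2.
  by rewrite ltxx.
have hp : p \in PL.
  by move: hc; rewrite mem_cat => /orP [/mapP [? _ //]|/mapP [q hq [->]]].
pose Qy k y := [/\ (1 <= (z k.+1).2)%N, y \in Vi ((z k.+1).2.-1) & (z k.+1).1 = piL (Lf p y)].
have c1 : forall k k' y y', (k < k')%N -> Qy k y -> Qy k' y' -> y' < y.
  move=> k k' y y' hkk [_ _ e] [_ _ e'].
  have := dec k.+1 k'.+1 hkk; rewrite e e' => hlt.
  rewrite ltNge; apply/negP => hle; move: hlt; rewrite ltNge piL_mono //.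
  by rewrite /Lf lerD2r ler_pM2r ?lp_gt0.
have c2 : forall y0, Acc RV y0 -> forall k y, Qy k y -> y < y0 -> False.
  move=> y0; elim=> y1 _ IH k y hq hlt.
  have [k' [hk' hq']] := hinf k.+1; have [y' hy'] := hq'.
  have hyV : inV y by case: hq => _ h _; exists (z k.+1).2.-1.
  apply: (IH y (conj hyV hlt) k' y' hy'); exact: c1 hk' hq hy'.
have [k [_ [y hy]]] := hinf 0%N.
have nacc : ~ Acc RV y.
  move=> hacc; have [k' [hk' [y' hy']]] := hinf k.+1.
  by apply: (c2 y hacc k' y' hy'); exact: c1 hk' hy hy'.
have [_ [_ _ _ hmin]] := hz k.
have hyV : inV y by case: hy => _ h _; exists (z k.+1).2.-1.
have hR : RV y (z k).1.
  split => //; have [_ [[_ hlt] _ _ _]] := hz k; apply: le_lt_trans hlt.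
  case: hy => _ _ ->; exact: piL_infl.
case: hy => h1 h2 _; have := hmin y _ hR nacc h2.
by case: ((z k.+1).2) h1 => // d _; rewrite /= ltnn.
Qed.

Lemma V_min (X : rat -> Prop) : (exists x, X x) -> (forall x, X x -> inV x) ->
  exists m, X m /\ forall y, X y -> m <= y.
Proof.
move=> [x hx] hXV; apply: NNPP => hn.
suff : forall x, Acc RV x -> ~ X x by move/(_ x (wf_RV x)).
move=> x1; elim=> x2 _ IH hx2; apply: hn; exists x2; split => // y hy.
rewrite leNgt; apply/negP => hlt; exact: (IH y (conj (hXV y hy) hlt)).
Qed.

Local Notation sgP := (fun p : nat * nat => lp p.1).
Local Notation itP := (fun p : nat * nat => (p.2)%:R : rat).
Local Notation brk := (@brkg _ PL sgP itP).

Lemma minz_mnz p x : minz p x <-> @mnz _ PL sgP itP p x.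
Proof. by []. Qed.

Lemma minz_valp {p x} : p \in PL -> minz p x -> p.2 = valp (a p.1).
Proof.
case: p => i j hp hm /=; apply/eqP; rewrite eqn_leq; apply/andP; split; last first.
  by apply: valp_le; move: hp; rewrite memPL => /and3P [].
have hv : (i, valp (a i)) \in PL by apply: PL_valp; [exact: (PL_le_n hp)|exact: (PL_nz hp)].
by have := hm _ hv; rewrite /Lf /= lerD2l ler_nat.
Qed.

Lemma brk_slope {c} : brk c -> - c \in slopesL.
Proof.
move=> [p [q [hp hq hne hmp hmq]]].
have hne' : p.1 != q.1 by apply: contra hne => /eqP ->.
wlog hlt : p q hp hq hne hmp hmq hne' / (p.1 < q.1)%N.
  move=> W; case: (ltngtP p.1 q.1) => h; first exact: (W p q).
    by apply: (W q p) => //; rewrite eq_sym.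
  by move: hne'; rewrite h eqxx.
case: p hp hne hmp hmq hne' hlt => i j hp hne hmp hmq hne' hlt.
case: q hq hne hmp hmq hne' hlt => i' j' hq hne hmp hmq hne' hlt /=.
have ej := minz_valp hp hmp; have ej' := minz_valp hq hmq; simpl in ej, ej', hlt.
have hin : forall k, k \in idxL n a -> (k, valp (a k)) \in PL.
  move=> k; rewrite mem_filter mem_iota add0n ltnS => /andP [h1 /andP [_ h2]].
  exact: PL_valp.
have hidx : forall k j, (k, j) \in PL -> k \in idxL n a.
  move=> k j0 h; rewrite mem_filter mem_iota add0n ltnS (PL_le_n h) (PL_nz h) //.
have hsl : slope_of l a i i' = - c.
  have e : Lf (i, j) c = Lf (i', j') c.
    by apply: le_anti; apply/andP; split; [exact: hmp | exact: hmq].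
  move: e; rewrite /Lf /= /slope_of -ej -ej' => e.
  have hd : lp i' - lp i != 0 by rewrite subr_eq0 eq_sym; apply/eqP => /lp_inj h; move: hne'; rewrite h eqxx.
  apply: (mulIf hd); rewrite mulfVK // mulNr -mulrN opprB mulrBr.
  by move: e; rewrite -/(lpow l i) -/(lpow l i') => e; rewrite mulrC [c * _]mulrC; lra.
rewrite /slopesL mem_undup; apply/allpairsPdep; exists i, i'; split.
- exact: hidx hp.
- rewrite mem_filter hlt hsl (hidx _ _ hq) andbT /=.
  apply/allP => k hk; have := hmp _ (hin k hk); rewrite /Lg /= -ej.
  lra.
- by rewrite hsl.
Qed.

Variables (d : nat) (tau : rat).
Hypothesis hd : (1 <= d)%N.
Hypothesis htau : is_tau l n a d tau.

Lemma gap {c y} : brk c -> inV y -> c < y -> tau <= y - c.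
Proof.
move=> hb hy hcy; have hs := brk_slope hb.
have [m [[hmV hmc] hmin]] := @V_min (fun w => inV w /\ c < w) (ex_intro _ y (conj hy hcy)) (fun x h => h.1).
have he : is_eps l n a (- (- c)) (m - c).
  rewrite opprK; split; first by exists m.
  by move=> x [w [hw [hcw ->]]]; rewrite lerD2r; apply: hmin.
have := htau.2 (m - c) (or_intror (ex_intro2 _ _ (- c) hs he)).
by move=> h; apply: le_trans h _; rewrite lerD2r; apply: hmin.
Qed.

Lemma tau_le : tau <= ((d * l ^ n)%N%:R)^-1.
Proof. by apply: htau.2; left. Qed.

Lemma dln_gt0 : 0 < ((d * l ^ n)%N%:R : rat).
Proof. by rewrite ltr0n muln_gt0 expn_gt0 hd; case: l hl. Qed.

Lemma Zn (m : nat) : (m%:R : rat) \is a Num.int.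
Proof. exact: rpred_nat. Qed.

Lemma Zscale (x : rat) (m m' : nat) : x * m%:R \is a Num.int -> (m %| m')%N ->
  x * m'%:R \is a Num.int.
Proof.
move=> h hd'; rewrite -(divnK hd') natrM mulrC -mulrA mulrC.
by rewrite rpredM // ?Zn // mulrC.
Qed.

Lemma dvd_dl s s' : (s <= s')%N -> (d * l ^ s %| d * l ^ s')%N.
Proof. by move=> h; rewrite dvdn_pmul2l // dvdn_exp2l. Qed.

Lemma shift_eq {i0 j0 ik jk} {v w : rat} t :
  v * lp i0 + j0%:R = w * lp ik + jk%:R ->
  v * (d * l ^ (i0 + t))%N%:R = w * (d * l ^ (ik + t))%N%:R + (jk%:R - j0%:R) * (d * l ^ t)%N%:R.
Proof.
move=> eq; have e' : v * lp i0 = w * lp ik + jk%:R - j0%:R by rewrite -eq addrK.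
have -> : v * (d * l ^ (i0 + t))%N%:R = (v * lp i0) * (d * l ^ t)%N%:R.
  by rewrite /lpow expnD !natrM; ring.
have -> : w * (d * l ^ (ik + t))%N%:R = (w * lp ik) * (d * l ^ t)%N%:R.
  by rewrite /lpow expnD !natrM; ring.
rewrite e'; ring.
Qed.

Lemma small_step {v w p0 s} :
  inV v -> inV w -> p0 \in PL -> piL (Lf p0 v) = w -> v < w -> w - v < tau ->
  w * (d * l ^ s)%N%:R \is a Num.int ->
  (1 <= s)%N /\ v * (d * l ^ s.-1)%N%:R \is a Num.int.
Proof.
move=> hv hw hp0 hpi hvw hsmall hws.
have hcontra : (w - v) * (d * l ^ n)%N%:R \is a Num.int -> False.
  move=> hi; have := gap_int _ _ dln_gt0 hi; rewrite subr_gt0 => /(_ hvw).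
  have := tau_le; move: hsmall; lra.
have [k hk hmk] := argmin_PL v.
case: (classic (minz k w)) => hkw; last first.
  have [c [h1 h2 h3]] := @BP_lt _ PL sgP itP k v w hk hmk hkw hvw.
  by have := gap h3 hw h2; move: hsmall h1; lra.
have [hq1 [p1 hp1 hq2]] := piL_char hpi.
have eq : Lf p0 v = Lf k w.
  apply: le_anti; rewrite hq1 //= hq2; exact: hkw.
move: eq; case: p0 hp0 {hpi hq1 hq2} => i0 j0 hp0.
case: k hk hmk hkw => ik jk hk hmk hkw; rewrite /Lf /= => eq.
have hi0 := PL_le_n hp0; have hik := PL_le_n hk; simpl in hi0, hik.
case: (ltngtP i0 ik) => hii.
- case: (leqP ik s) => hs.
  + split; first by apply: leq_trans hs; apply: leq_ltn_trans hii.
    have := shift_eq (s - ik) eq; rewrite subnKC // => e.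
    apply: (@Zscale _ (d * l ^ (i0 + (s - ik)))%N); last first.
      by apply: dvd_dl; lia.
    by rewrite e; apply: rpredD => //; rewrite rpredM ?rpredB ?Zn.
  + exfalso; apply: hcontra.
    have := shift_eq 0 eq; rewrite !addn0 => e.
    have hw' : w * (d * l ^ ik)%N%:R \is a Num.int by apply: Zscale hws _; apply: dvd_dl; exact: ltnW.
    have hv' : v * (d * l ^ i0)%N%:R \is a Num.int by rewrite e; apply: rpredD => //; rewrite rpredM ?rpredB ?Zn.
    rewrite mulrBl rpredB //; apply: Zscale; [exact: hw'|exact: dvd_dl|exact: hv'|exact: dvd_dl].
- exfalso.
  pose y := v + v - w.
  have hlp := lp_lt2 hii.
  have key : Lf (i0, j0) y <= Lf (ik, jk) y.
    rewrite /Lf /= /y.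
    have : 0 <= (w - v) * (lp i0 - 2 * lp ik).
      by apply: mulr_ge0; rewrite subr_ge0 // ltW.
    move: eq; nra.
  have hyv : y < v by rewrite /y; lra.
  case: (classic (minz (ik, jk) y)) => hky.
  + have hb : brk y.
      exists (i0, j0), (ik, jk); split => //.
      * by apply/eqP => /lp_inj /= h; move: hii; rewrite h ltnn.
      * move=> p hp; exact: le_trans key (hky p hp).
    by have := gap hb hv hyv; rewrite /y; move: hsmall; lra.
  + have [c [h1 h2 h3]] := @BP_gt _ PL sgP itP (ik, jk) v y hk hmk hky hyv.
    case: (eqVneq c v) => [ec|nec].
      by have := gap h3 hw; rewrite ec => /(_ hvw); move: hsmall; lra.
    have hcv : c < v by rewrite lt_neqAle nec h2.
    by have := gap h3 hv hcv; rewrite /y in h1; move: hsmall h1; lra.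
- exfalso; apply: hcontra; rewrite hii in eq hi0.
  have := shift_eq (n - ik) eq; rewrite subnKC // => e.
  by rewrite mulrBl e opprD addrA subrr add0r rpredN rpredM ?rpredB ?Zn.
Qed.

Lemma big_step {v w p0 s} : p0 \in PL -> piL (Lf p0 v) = w ->
  w * (d * l ^ s)%N%:R \is a Num.int -> v * (d * l ^ (s + n))%N%:R \is a Num.int.
Proof.
move=> hp0 hpi hws; have [_ [p1 hp1 e]] := piL_char hpi; clear hpi.
move: e; case: p0 hp0 => i0 j0 hp0; case: p1 hp1 => i1 j1 hp1; rewrite /Lf /= => e.
have hi0 := PL_le_n hp0; simpl in hi0.
have := shift_eq (s + n - i0) e; rewrite subnKC; last by lia.
move=> ->; apply: rpredD; last by rewrite rpredM ?rpredB ?Zn.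
by apply: Zscale hws _; apply: dvd_dl; lia.
Qed.

Variables (H : nat) (N : rat).
Hypothesis hH : forall e, e \in E -> e * (d * l ^ H)%N%:R \is a Num.int.
Hypothesis hNE : forall e, e \in E -> e <= N.
Hypothesis hNS : forall mu, mu \in slopesL -> - mu <= N.
Hypothesis hdS : forall mu, mu \in slopesL -> mu * d%:R \is a Num.int.

Lemma chain k v : Ri k v -> (forall k', (k' < k)%N -> ~ Ri k' v) ->
  exists b sg s : nat, [/\ k = (b + sg)%N, v * (d * l ^ s)%N%:R \is a Num.int,
     (sg + s <= H + n * b)%N & v + b%:R * tau <= N].
Proof.
elim: k v => [|k IH] v.
  move=> h0 _; exists 0%N, 0%N, H; rewrite muln0 addn0; split => //.
  - case: h0 => [hE|hS]; first exact: hH.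
    have := hdS _ hS; rewrite mulNr rpredN => h; apply: Zscale h _; exact: dvdn_mulr.
  - by rewrite add0n addn0.
  - rewrite mul0r addr0; case: h0 => [hE|hS]; first exact: hNE.
    by have := hNS _ hS; rewrite opprK.
move=> [hv [q /mem_Psi [p0 hp0 ->] hw]] hmin.
set w := piL (Lf p0 v) in hw.
have hwmin : forall k', (k' < k)%N -> ~ Ri k' w.
  move=> k' hk' hr; apply: (hmin k'.+1); first by rewrite ltnS.
  split => //; exists (Lf p0 v) => //; apply/mem_Psi; by exists p0.
have [b [sg [s [hk hws hss hN]]]] := IH w hw hwmin.
have hwV := Ri_inV hw.
have hvw : v < w.
  rewrite lt_neqAle piL_infl // andbT; apply/eqP => ev.
  by apply: (hmin k (ltnSn _)); rewrite ev.
case: (ltP (w - v) tau) => hsm.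
  have [hs1 hvs] := small_step hv hwV hp0 erefl hvw hsm hws.
  exists b, sg.+1, s.-1; split => //.
  - by rewrite hk addnS.
  - by rewrite addSn -addnS prednK.
  - by move: hN; lra.
exists b.+1, sg, (s + n)%N; split.
- by rewrite hk addSn.
- exact: big_step hp0 erefl hws.
- by rewrite addnA mulnS; lia.
- by rewrite -addn1 natrD mulrDl mul1r; move: hN hsm; lra.
Qed.

End M.

Theorem mainTheorem19 (K : fieldType) (l n : nat) (a : nat -> {poly K})
  (hl : (2 <= l)%N) (hn : (1 <= n)%N) (ha0 : a 0%N != 0) (han : a n != 0)
  (d : nat) (hd : (1 <= d)%N)
  (hdS : forall mu, mu \in slopesL l n a -> mu * d%:R \is a Num.int)
  (tau : rat) (htau : is_tau l n a d tau)
  (E : seq rat) (hEV : forall e, e \in E -> inV l n a e)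
  (H : nat) (hH : forall e, e \in E -> e * (d * l ^ H)%N%:R \is a Num.int)
  (N : rat) (hN0 : 0 <= N)
  (hNE : forall e, e \in E -> e <= N)
  (hNS : forall mu, mu \in slopesL l n a -> - mu <= N) :
  let c : int := Num.floor (n.+1%:R * (N + mu_max l n a) / tau) + H%:Z in
  forall i : nat, c <= i%:Z ->
    forall v : rat, Ri l n a E i v <-> inR l n a E v.
Proof.
move=> c i hc v; split; first by move=> h; exists i.
move=> [k0 hk0].
have [k [hk hkmin]] := @classical_min (fun k => Ri l n a E k v) (ex_intro _ k0 hk0).
have hmin' : forall k', (k' < k)%N -> ~ Ri l n a E k' v.
  by move=> k' hk' hr; have := hkmin k' hr; rewrite leqNgt hk'.
have [b [sg [s [ek hvs hss hN]]]] := @chain K l n a hl ha0 E hEV d tau hd htau H N hH hNE hNS hdS k v hk hmin'.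
have hvV := @Ri_inV K l n a E hEV k v hk.
have hvge := @inV_ge K l n a hl v hvV.
have htau0 : 0 < tau.
  case: htau => [[->|[mu _ [[w [_ [hw ->]]] _]]] _].
    by rewrite invr_gt0 ltr0n muln_gt0 hd expn_gt0 (ltn_trans _ hl).
  by rewrite subr_gt0.
have hb : (n.+1 * b)%N%:R <= n.+1%:R * (N + mu_max l n a) / tau.
  rewrite natrM -mulrA ler_pM2l ?ltr0n // ler_pdivlMr //.
  by move: hN hvge; lra.
have hb' : ((n.+1 * b)%N%:Z <= Num.floor (n.+1%:R * (N + mu_max l n a) / tau))%R.
  by rewrite floor_ge_int.
apply: (@Ri_mono K l n a hl ha0 E hEV k i v) => //.
have : (k%:Z <= i%:Z)%R.
  apply: le_trans hc; rewrite /c; apply: le_trans (lerD hb' (lexx H%:Z)).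
  rewrite ek -PoszD lez_nat; lia.
by rewrite lez_nat.
Qed.
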